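(* Let $\varphi(s,v)=\vec c(s)+v\vec q(s)$ be a developable timelike ruled surface of type $M^1_-$ in $\mathbb{R}^3_1$, and let $R$ be a nonzero constant. A developable timelike ruled surface $\varphi^*$ of type $M^1_+$ or $M^1_-$ with striction curve $\vec c^*=\vec c+R\vec a$ is a Mannheim offset of $\varphi$ if and only if $$\frac{d\kappa}{ds}=-\frac{1}{R}\left(R^2\kappa^2\left(\frac{ds_1}{ds}\right)^2-1\right)-\frac{1}{ds_1/ds}\frac{d^2s_1}{ds^2}\kappa .$$
   Context: Work in Minkowski 3-space $\mathbb{R}^3_1$, i.e. $\mathbb{R}^3$ with $\langle x,y\rangle=-x_1y_1+x_2y_2+x_3y_3$, norm $\|x\|=\sqrt{|\langle x,x\rangle|}$, and Lorentzian cross product $x\times y=(x_2y_3-x_3y_2,\,x_1y_3-x_3y_1,\,x_2y_1-x_1y_2)$. A ruled surface is $\varphi(s,v)=\vec c(s)+v\vec q(s)$, where $\vec q$ is a unit non-null vector field with $\langle\vec q,\vec q\rangle=\varepsilon_2\in\{\pm1\}$, $d\vec q/ds$ is non-null, and the base curve $\vec c$ is the striction curve, i.e. $\langle d\vec q/ds,d\vec c/ds\rangle=0$; $s$ is the arc-length parameter of $\vec c$. Its Frenet frame is $\{\vec q,\vec h,\vec a\}$ with central normal $\vec h=\frac{d\vec q/ds}{\|d\vec q/ds\|}$ and asymptotic normal $\vec a=\frac{(d\vec q/ds)\times\vec q}{\|d\vec q/ds\|}$. The surface is of type $M^1_-$ if $\vec q$ is timelike and $\vec h$ spacelike; of type $M^1_+$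 if $\vec q$ and $\vec h$ are both spacelike (both timelike surfaces). Let $s_1$ be the arc-length parameter of the spherical image curve traced by $\vec q$, and $\kappa$ the conical curvature of the directing cone; for types $M^1_\pm$: $d\vec q/ds_1=\vec h$, $d\vec h/ds_1=-\varepsilon_2\vec q+\kappa\vec a$, $d\vec a/ds_1=\varepsilon_2\kappa\vec h$. A ruled surface is developable iff its distribution parameter $\det(d\vec c/ds,\vec q,d\vec q/ds)/\langle d\vec q/ds,d\vec q/ds\rangle$ vanishes identically. A ruled surface $\varphi^*(s,v)=\vec c^*(s)+v\vec q^*(s)$ with striction curve $\vec c^*$ and Frenet frame $\{\vec q^*,\vec h^*,\vec a^*\}$ is a Mannheim offset of the timelike ruled surface $\varphi$ if there is a one-to-one correspondence between their rulings such that $\vec h^*=\vec a$. *)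

(* Defs.v *)
From Stdlib Require Import Reals.
From Coquelicot Require Import Coquelicot.
Open Scope R_scope.

Record V3 := mkV3 { v1 : R; v2 : R; v3 : R }.

Definition vadd (x y : V3) : V3 := mkV3 (v1 x + v1 y) (v2 x + v2 y) (v3 x + v3 y).
Definition vscale (k : R) (x : V3) : V3 := mkV3 (k * v1 x) (k * v2 x) (k * v3 x).
Definition vopp (x : V3) : V3 := vscale (-1) x.

Definition lip (x y : V3) : R := - v1 x * v1 y + v2 x * v2 y + v3 x * v3 y.
Definition lnorm (x : V3) : R := sqrt (Rabs (lip x x)).
Definition lcross (x y : V3) : V3 :=
  mkV3 (v2 x * v3 y - v3 x * v2 y) (v1 x * v3 y - v3 x * v1 y) (v2 x * v1 y - v1 x * v2 y).
Definition det3 (x y z : V3) : R :=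
  v1 x * (v2 y * v3 z - v3 y * v2 z) - v2 x * (v1 y * v3 z - v3 y * v1 z)
  + v3 x * (v1 y * v2 z - v2 y * v1 z).

Definition timelike (x : V3) : Prop := lip x x < 0.
Definition spacelike (x : V3) : Prop := 0 < lip x x.

Definition interval (a b : Rbar) (s : R) : Prop := Rbar_lt a s /\ Rbar_lt s b.

Definition vD (f : R -> V3) (s : R) : V3 :=
  mkV3 (Derive (fun t => v1 (f t)) s) (Derive (fun t => v2 (f t)) s)
       (Derive (fun t => v3 (f t)) s).

Definition smooth_on (I : R -> Prop) (g : R -> R) : Prop :=
  forall n s, I s -> ex_derive_n g n s.
Definition vsmooth_on (I : R -> Prop) (f : R -> V3) : Prop :=
  smooth_on I (fun t => v1 (f t)) /\ smooth_on I (fun t => v2 (f t)) /\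
  smooth_on I (fun t => v3 (f t)).

(** Ruled surface phi(s,v) = c(s) + v q(s) on parameter set I:
    q unit non-null with <q,q> = eps2 in {1,-1}, dq/ds non-null,
    c the striction curve (<dq/ds, dc/ds> = 0). *)
Definition ruled_surface (I : R -> Prop) (c q : R -> V3) : Prop :=
  vsmooth_on I c /\ vsmooth_on I q /\
  (exists eps2 : R, (eps2 = 1 \/ eps2 = -1) /\ forall s, I s -> lip (q s) (q s) = eps2) /\
  (forall s, I s -> lip (vD q s) (vD q s) <> 0) /\
  (forall s, I s -> lip (vD q s) (vD c s) = 0).

Definition arclength_param (I : R -> Prop) (c : R -> V3) : Prop :=
  forall s, I s -> lnorm (vD c s) = 1.

Definition central_normal (q : R -> V3) (s : R) : V3 :=
  vscale (/ lnorm (vD q s)) (vD q s).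
Definition asymptotic_normal (q : R -> V3) (s : R) : V3 :=
  vscale (/ lnorm (vD q s)) (lcross (vD q s) (q s)).

Definition distribution_parameter (c q : R -> V3) (s : R) : R :=
  det3 (vD c s) (q s) (vD q s) / lip (vD q s) (vD q s).
Definition developable (I : R -> Prop) (c q : R -> V3) : Prop :=
  forall s, I s -> distribution_parameter c q s = 0.

Definition type_Mminus (I : R -> Prop) (q : R -> V3) : Prop :=
  forall s, I s -> timelike (q s) /\ spacelike (central_normal q s).
Definition type_Mplus (I : R -> Prop) (q : R -> V3) : Prop :=
  forall s, I s -> spacelike (q s) /\ spacelike (central_normal q s).

(** ds1/ds, where s1 is the arc length of the spherical image of q. *)
Definition dsig1 (q : R -> V3) (s : R) : R := lnorm (vD q s).

(** Conical curvature kappa: the coefficient of a in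
    dh/ds1 = -eps2 q + kappa a, where dh/ds1 = (dh/ds)/(ds1/ds);
    since a is orthogonal to q and h, kappa = <dh/ds1, a>/<a,a>. *)
Definition conical_curvature (q : R -> V3) (s : R) : R :=
  lip (vD (central_normal q) s) (asymptotic_normal q s)
  / (dsig1 q s * lip (asymptotic_normal q s) (asymptotic_normal q s)).

(** phi* = (cs, qs) is a Mannheim offset of phi = (c, q), the rulings
    corresponding through the common parameter s: h* = a. *)
Definition mannheim_offset (I : R -> Prop) (c q cs qs : R -> V3) : Prop :=
  forall s, I s -> central_normal qs s = asymptotic_normal q s.

(** The surface phi* (its rulings taken with either orientation,
    i.e. phi*(s,v) or its reparametrization phi*(s,-v)) is a Mannheim
    offset of phi. *)
Definition mannheim_offset_surface (I : R -> Prop) (c q cs qs : R -> V3) : Prop :=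
  mannheim_offset I c q cs qs \/ mannheim_offset I c q cs (fun s => vopp (qs s)).

(* Main.v *)
Require Import Defs.
From Stdlib Require Import Reals Lra.
From Coquelicot Require Import Coquelicot.
Open Scope R_scope.

Definition opn (U : R -> Prop) := forall t, U t -> locally t U.

Fixpoint CC (U : R -> Prop) (k : nat) (g : R -> R) : Prop :=
  match k with
  | O => forall t, U t -> continuous g t
  | S k => (forall t, U t -> ex_derive g t) /\ CC U k (Derive g)
  end.

Lemma opn_ext U (g1 g2 : R -> R) t : opn U -> U t -> (forall t, U t -> g1 t = g2 t) ->
  locally t (fun y => g1 y = g2 y).
Proof. intros HU Ht H. apply (filter_imp U); auto. Qed.

Lemma CC_ext U k : opn U -> forall g1 g2, (forall t, U t -> g1 t = g2 t) -> CC U k g1 -> CC U k g2.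
Proof.
  intros HU; induction k as [|k IH]; intros g1 g2 E H; simpl in *.
  - intros t Ht. apply (continuous_ext_loc g2 g1 t). 
    apply (opn_ext U g1 g2 t HU Ht). auto. auto.
  - destruct H as [H1 H2]; split.
    + intros t Ht. apply (ex_derive_ext_loc g1 g2 t); auto. apply (opn_ext U); auto.
    + apply (IH (Derive g1)); auto. intros t Ht. apply Derive_ext_loc. apply (opn_ext U); auto.
Qed.

Lemma CC_S U k g : CC U (S k) g -> CC U k g.
Proof.
  revert g; induction k as [|k IH]; intros g H; simpl in *.
  - destruct H as [H _]. intros t Ht; apply (@ex_derive_continuous R_AbsRing R_NormedModule); auto.
  - destruct H as [H1 H2]; split; auto.
Qed.

Lemma CC_le U k m g : (k <= m)%nat -> CC U m g -> CC U k g.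
Proof. induction 1; auto. intros Hm; apply IHle, CC_S, Hm. Qed.

Lemma CC_const U k c : opn U -> CC U k (fun _ => c).
Proof.
  intros HU; revert c; induction k as [|k IH]; intros c; simpl.
  - intros; apply continuous_const.
  - split. intros; apply ex_derive_const.
    apply (CC_ext U k HU (fun _ => 0)); auto. intros; rewrite Derive_const; auto.
Qed.

Lemma CC_plus U k : opn U -> forall g1 g2, CC U k g1 -> CC U k g2 -> CC U k (fun t => g1 t + g2 t).
Proof.
  intros HU; induction k as [|k IH]; intros g1 g2 H1 H2; simpl in *.
  - intros t Ht. exact (continuous_plus g1 g2 t (H1 t Ht) (H2 t Ht)).
  - destruct H1 as [A1 B1], H2 as [A2 B2]; split.
    + intros t Ht; exact (ex_derive_plus g1 g2 t (A1 t Ht) (A2 t Ht)).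
    + apply (CC_ext U k HU (fun t => Derive g1 t + Derive g2 t)); auto.
      intros t Ht; rewrite Derive_plus; auto.
Qed.

Lemma CC_opp U k : opn U -> forall g, CC U k g -> CC U k (fun t => - g t).
Proof.
  intros HU; induction k as [|k IH]; intros g H; simpl in *.
  - intros t Ht. exact (continuous_opp g t (H t Ht)).
  - destruct H as [A B]; split.
    + intros t Ht; exact (ex_derive_opp g t (A t Ht)).
    + apply (CC_ext U k HU (fun t => - Derive g t)); auto.
      intros t Ht; rewrite Derive_opp; auto.
Qed.

Lemma CC_mult U k : opn U -> forall g1 g2, CC U k g1 -> CC U k g2 -> CC U k (fun t => g1 t * g2 t).
Proof.
  intros HU; induction k as [|k IH]; intros g1 g2 H1 H2.
  - simpl in *. intros t Ht. exact (continuous_mult g1 g2 t (H1 t Ht) (H2 t Ht)).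
  - pose proof (CC_S _ _ _ H1) as H1'. pose proof (CC_S _ _ _ H2) as H2'.
    simpl in H1, H2 |- *. destruct H1 as [A1 B1], H2 as [A2 B2]; split.
    + intros t Ht; apply ex_derive_mult; auto.
    + apply (CC_ext U k HU (fun t => Derive g1 t * g2 t + g1 t * Derive g2 t)); auto.
      intros t Ht; rewrite Derive_mult; auto.
      apply CC_plus; auto.
Qed.

Lemma CC_inv U k : opn U -> forall g, (forall t, U t -> g t <> 0) -> CC U k g -> CC U k (fun t => / g t).
Proof.
  intros HU; induction k as [|k IH]; intros g Hg H.
  - simpl in *. intros t Ht. apply continuous_Rinv_comp; auto.
  - pose proof (CC_S _ _ _ H) as H'. simpl in H |- *. destruct H as [A B]; split.
    + intros t Ht; apply ex_derive_inv; auto.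
    + apply (CC_ext U k HU (fun t => - Derive g t * (/ g t * / g t))); auto.
      intros t Ht; rewrite Derive_inv; auto. field. auto.
      apply CC_mult; auto. apply CC_opp; auto. apply CC_mult; auto.
Qed.

Lemma CC_sqrt U k : opn U -> forall g, (forall t, U t -> 0 < g t) -> CC U k g -> CC U k (fun t => sqrt (g t)).
Proof.
  intros HU; induction k as [|k IH]; intros g Hg H.
  - simpl in *. intros t Ht. apply continuous_sqrt_comp; auto.
  - pose proof (CC_S _ _ _ H) as H'. simpl in H |- *. destruct H as [A B]; split.
    + intros t Ht. eexists. apply is_derive_sqrt; auto. apply Derive_correct; auto.
    + apply (CC_ext U k HU (fun t => Derive g t * / (2 * sqrt (g t)))); auto.
      intros t Ht. symmetry. apply is_derive_unique. apply is_derive_sqrt; auto. apply Derive_correct; auto.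
      apply CC_mult; auto. apply CC_inv; auto.
      intros t Ht. specialize (Hg t Ht). apply Rgt_not_eq. apply Rmult_gt_0_compat. lra. apply sqrt_lt_R0; auto.
      apply CC_mult; auto. apply CC_const; auto.
Qed.

Lemma CC_smooth U g : smooth_on U g -> forall k, CC U k g.
Proof.
  intros H k. cut (forall m, CC U k (Derive_n g m)). intros C; apply (C 0%nat).
  induction k as [|k IH]; intros m; simpl.
  - intros t Ht. apply (@ex_derive_continuous R_AbsRing R_NormedModule). apply (H (S m) t Ht).
  - split. intros t Ht. apply (H (S m) t Ht). apply (IH (S m)).
Qed.

Lemma V3_eq x y : v1 x = v1 y -> v2 x = v2 y -> v3 x = v3 y -> x = y.
Proof. destruct x, y; simpl; intros; subst; auto. Qed.

Lemma zero_lemma e x y z : lip e x = 0 -> lip e y = 0 -> lip e z = 0 -> det3 x y z <> 0 ->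
  e = mkV3 0 0 0.
Proof.
  intros Hx Hy Hz Hd.
  assert (E1 : det3 x y z * (- v1 e) = lip e x * (v2 y * v3 z - v3 y * v2 z) + lip e y * (v2 z * v3 x - v3 z * v2 x) + lip e z * (v2 x * v3 y - v3 x * v2 y))
    by (unfold lip, det3; ring).
  assert (E2 : det3 x y z * v2 e = lip e x * (v3 y * v1 z - v1 y * v3 z) + lip e y * (v3 z * v1 x - v1 z * v3 x) + lip e z * (v3 x * v1 y - v1 x * v3 y))
    by (unfold lip, det3; ring).
  assert (E3 : det3 x y z * v3 e = lip e x * (v1 y * v2 z - v2 y * v1 z) + lip e y * (v1 z * v2 x - v2 z * v1 x) + lip e z * (v1 x * v2 y - v2 x * v1 y))
    by (unfold lip, det3; ring).
  rewrite Hx, Hy, Hz in E1, E2, E3.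
  apply V3_eq; simpl.
  - assert (det3 x y z * - v1 e = 0) by lra. apply Rmult_integral in H. destruct H; [contradiction| lra].
  - assert (det3 x y z * v2 e = 0) by lra. apply Rmult_integral in H. destruct H; [contradiction| lra].
  - assert (det3 x y z * v3 e = 0) by lra. apply Rmult_integral in H. destruct H; [contradiction| lra].
Qed.

Lemma det_cross x y z : det3 x y z = - lip (lcross x y) z.
Proof. unfold det3, lip, lcross; simpl; ring. Qed.
Lemma cross_norm x y : lip (lcross x y) (lcross x y) = - (lip x x * lip y y - lip x y ^ 2).
Proof. unfold lip, lcross; simpl; ring. Qed.
Lemma cross_orth1 x y : lip (lcross x y) x = 0.
Proof. unfold lip, lcross; simpl; ring. Qed.
Lemma cross_orth2 x y : lip (lcross x y) y = 0.
Proof. unfold lip, lcross; simpl; ring. Qed.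
Lemma lip_sym x y : lip x y = lip y x.
Proof. unfold lip; ring. Qed.

Lemma par_lemma W P D X : lip D W = 0 -> lip D P = 0 -> det3 W P D = 0 -> lip D D <> 0 ->
  vscale (lip W X) P = vscale (lip P X) W.
Proof.
  intros H1 H2 H3 H4.
  set (N := lcross W P).
  assert (N1 : v1 N = 0).
  { assert (E : lip D D * v1 N = - det3 W P D * v1 D + lip W D * v1 (lcross D P) - lip P D * v1 (lcross D W))
      by (unfold N, lip, det3, lcross; simpl; ring).
    rewrite (lip_sym W D), (lip_sym P D), H1, H2, H3 in E.
    assert (lip D D * v1 N = 0) by lra. apply Rmult_integral in H. destruct H; [contradiction|auto]. }
  assert (N2 : v2 N = 0).
  { assert (E : lip D D * v2 N = - det3 W P D * v2 D + lip W D * v2 (lcross D P) - lip P D * v2 (lcross D W))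
      by (unfold N, lip, det3, lcross; simpl; ring).
    rewrite (lip_sym W D), (lip_sym P D), H1, H2, H3 in E.
    assert (lip D D * v2 N = 0) by lra. apply Rmult_integral in H. destruct H; [contradiction|auto]. }
  assert (N3 : v3 N = 0).
  { assert (E : lip D D * v3 N = - det3 W P D * v3 D + lip W D * v3 (lcross D P) - lip P D * v3 (lcross D W))
      by (unfold N, lip, det3, lcross; simpl; ring).
    rewrite (lip_sym W D), (lip_sym P D), H1, H2, H3 in E.
    assert (lip D D * v3 N = 0) by lra. apply Rmult_integral in H. destruct H; [contradiction|auto]. }
  apply V3_eq; simpl.
  - assert (E : v2 N * v3 X - v3 N * v2 X = - (lip W X * v1 P - lip P X * v1 W)) by (unfold N, lip, lcross; simpl; ring).
    rewrite ?N1, ?N2, ?N3 in E. lra.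
  - assert (E : v1 N * v3 X - v3 N * v1 X = - (lip W X * v2 P - lip P X * v2 W)) by (unfold N, lip, lcross; simpl; ring).
    rewrite ?N1, ?N2, ?N3 in E. lra.
  - assert (E : v2 N * v1 X - v1 N * v2 X = - (lip W X * v3 P - lip P X * v3 W)) by (unfold N, lip, lcross; simpl; ring).
    rewrite ?N1, ?N2, ?N3 in E. lra.
Qed.

Lemma lip_add_l x y z : lip (vadd x y) z = lip x z + lip y z.
Proof. unfold lip, vadd; simpl; ring. Qed.
Lemma lip_add_r x y z : lip z (vadd x y) = lip z x + lip z y.
Proof. unfold lip, vadd; simpl; ring. Qed.
Lemma lip_scale_l k x z : lip (vscale k x) z = k * lip x z.
Proof. unfold lip, vscale; simpl; ring. Qed.
Lemma lip_scale_r k x z : lip z (vscale k x) = k * lip z x.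
Proof. unfold lip, vscale; simpl; ring. Qed.

Definition vdiff (x : R -> V3) t := ex_derive (fun t => v1 (x t)) t /\ ex_derive (fun t => v2 (x t)) t /\ ex_derive (fun t => v3 (x t)) t.

Lemma Dlip x y t : vdiff x t -> vdiff y t ->
  Derive (fun t => lip (x t) (y t)) t = lip (vD x t) (y t) + lip (x t) (vD y t).
Proof.
  intros [X1 [X2 X3]] [Y1 [Y2 Y3]].
  unfold lip, vD; simpl.
  set (x1 := fun t => v1 (x t)). set (x2 := fun t => v2 (x t)). set (x3 := fun t => v3 (x t)).
  set (y1 := fun t => v1 (y t)). set (y2 := fun t => v2 (y t)). set (y3 := fun t => v3 (y t)).
  change (Derive (fun t => - x1 t * y1 t + x2 t * y2 t + x3 t * y3 t) t =
   - Derive x1 t * y1 t + Derive x2 t * y2 t + Derive x3 t * y3 t +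
   (- x1 t * Derive y1 t + x2 t * Derive y2 t + x3 t * Derive y3 t)).
  apply is_derive_unique. auto_derive. repeat split; auto. unfold x1,x2,x3,y1,y2,y3; cbv beta; ring.
Qed.

Definition VCC U k (x : R -> V3) := CC U k (fun t => v1 (x t)) /\ CC U k (fun t => v2 (x t)) /\ CC U k (fun t => v3 (x t)).

Ltac cc HU := unfold Rminus; repeat (first [assumption | apply (CC_plus _ _ HU) | apply (CC_opp _ _ HU) | apply (CC_mult _ _ HU)]).

Lemma VCC_vdiff U k x t : VCC U (S k) x -> U t -> vdiff x t.
Proof. intros [[A _] [[B _] [C _]]] Ht. repeat split; auto. Qed.

Lemma VCC_vD U k x : VCC U (S k) x -> VCC U k (vD x).
Proof. intros [[_ A] [[_ B] [_ C]]]. repeat split; auto. Qed.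

Lemma VCC_S U k x : VCC U (S k) x -> VCC U k x.
Proof. intros [A [B C]]. repeat split; apply CC_S; auto. Qed.

Lemma CC_lip U k x y : opn U -> VCC U k x -> VCC U k y -> CC U k (fun t => lip (x t) (y t)).
Proof.
  intros HU [X1 [X2 X3]] [Y1 [Y2 Y3]]. unfold lip. cc HU.
Qed.

Lemma VCC_scale U k s x : opn U -> CC U k s -> VCC U k x -> VCC U k (fun t => vscale (s t) (x t)).
Proof. intros HU S [X1 [X2 X3]]. unfold vscale; simpl. repeat split; cc HU. Qed.

Lemma VCC_cross U k x y : opn U -> VCC U k x -> VCC U k y -> VCC U k (fun t => lcross (x t) (y t)).
Proof.
  intros HU [X1 [X2 X3]] [Y1 [Y2 Y3]]. unfold lcross; simpl.
  repeat split; cc HU.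
Qed.

Lemma Dconst_lip U x y C t : opn U -> U t -> (forall t, U t -> lip (x t) (y t) = C) ->
  vdiff x t -> vdiff y t -> lip (vD x t) (y t) + lip (x t) (vD y t) = 0.
Proof.
  intros HU Ht H X Y. rewrite <- Dlip; auto.
  rewrite (Derive_ext_loc _ (fun _ => C)). apply Derive_const.
  apply (opn_ext U); auto.
Qed.

Lemma cross_scale_l k x y : lcross (vscale k x) y = vscale k (lcross x y).
Proof. apply V3_eq; unfold lcross, vscale; simpl; ring. Qed.
Lemma det_cross2 x y : det3 x y (lcross y x) = lip (lcross y x) (lcross y x).
Proof. unfold det3, lip, lcross; simpl; ring. Qed.

Definition frameH U q := opn U /\ (forall k, VCC U k q) /\ (forall t, U t -> lip (q t) (q t) = -1) /\
  (forall t, U t -> 0 < lip (vD q t) (vD q t)).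


Lemma f_eq U q t : frameH U q -> U t -> dsig1 q t = sqrt (lip (vD q t) (vD q t)).
Proof. intros (_&_&_&HF) Ht. unfold dsig1, lnorm. rewrite Rabs_pos_eq; auto. apply Rlt_le; auto. Qed.

Lemma f_pos U q t : frameH U q -> U t -> 0 < dsig1 q t.
Proof. intros H Ht. rewrite (f_eq U q t H Ht). apply sqrt_lt_R0. destruct H as (_&_&_&HF); auto. Qed.

Lemma f_sq U q t : frameH U q -> U t -> dsig1 q t * dsig1 q t = lip (vD q t) (vD q t).
Proof. intros H Ht. rewrite (f_eq U q t H Ht). apply sqrt_sqrt. destruct H as (_&_&_&HF); apply Rlt_le; auto. Qed.

Lemma CC_f U q k : frameH U q -> CC U k (dsig1 q).
Proof.
  intros H. pose proof H as (HU&HQ&_&HF).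
  apply (CC_ext U k HU (fun t => sqrt (lip (vD q t) (vD q t)))).
  intros; symmetry; apply (f_eq U); auto.
  apply CC_sqrt; auto. apply CC_lip; auto; apply VCC_vD; auto.
Qed.

Lemma VCC_h U q k : frameH U q -> VCC U k (central_normal q).
Proof.
  intros H. pose proof H as (HU&HQ&_&HF).
  apply (VCC_scale U k (fun t => / dsig1 q t) (vD q)); auto.
  apply CC_inv; auto. intros t Ht; apply Rgt_not_eq, (f_pos U); auto. apply CC_f; auto.
  apply VCC_vD; auto.
Qed.

Lemma VCC_a U q k : frameH U q -> VCC U k (asymptotic_normal q).
Proof.
  intros H. pose proof H as (HU&HQ&_&HF).
  apply (VCC_scale U k (fun t => / dsig1 q t) (fun t => lcross (vD q t) (q t))); auto.
  apply CC_inv; auto. intros t Ht; apply Rgt_not_eq, (f_pos U); auto. apply CC_f; auto.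
  apply VCC_cross; auto. apply VCC_vD; auto.
Qed.

Lemma alg1 U q t : frameH U q -> U t ->
  lip (vD q t) (q t) = 0 /\ vD q t = vscale (dsig1 q t) (central_normal q t) /\
  lip (central_normal q t) (central_normal q t) = 1 /\ lip (central_normal q t) (q t) = 0 /\
  asymptotic_normal q t = lcross (central_normal q t) (q t) /\
  lip (asymptotic_normal q t) (asymptotic_normal q t) = 1 /\
  lip (asymptotic_normal q t) (q t) = 0 /\ lip (asymptotic_normal q t) (central_normal q t) = 0 /\
  det3 (q t) (central_normal q t) (asymptotic_normal q t) = 1.
Proof.
  intros H Ht. pose proof H as (HU&HQ&Hqq&HF).
  pose proof (f_pos U q t H Ht) as Hf. pose proof (f_sq U q t H Ht) as Hf2.
  assert (D0 : lip (vD q t) (q t) = 0).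
  { pose proof (Dconst_lip U q q (-1) t HU Ht Hqq (VCC_vdiff U 0 q t (HQ 1%nat) Ht) (VCC_vdiff U 0 q t (HQ 1%nat) Ht)).
    rewrite (lip_sym (q t) (vD q t)) in H0. lra. }
  assert (Eh : central_normal q t = vscale (/ dsig1 q t) (vD q t)) by reflexivity.
  assert (Ea : asymptotic_normal q t = vscale (/ dsig1 q t) (lcross (vD q t) (q t))) by reflexivity.
  assert (Hhh : lip (central_normal q t) (central_normal q t) = 1).
  { rewrite Eh, lip_scale_l, lip_scale_r, <- Hf2. field. lra. }
  assert (Hhq : lip (central_normal q t) (q t) = 0).
  { rewrite Eh, lip_scale_l, D0. ring. }
  assert (Eah : asymptotic_normal q t = lcross (central_normal q t) (q t)).
  { rewrite Ea, Eh, cross_scale_l. reflexivity. }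
  assert (Haa : lip (asymptotic_normal q t) (asymptotic_normal q t) = 1).
  { rewrite Eah, cross_norm, Hhh, Hqq, Hhq; auto. ring. }
  repeat split; auto.
  - rewrite Eh. apply V3_eq; unfold vscale; simpl; field; lra.
  - rewrite Eah, cross_orth2; auto.
  - rewrite Eah, cross_orth1; auto.
  - rewrite Eah, det_cross2, <- Eah; auto.
Qed.

Lemma alg2 U q t : frameH U q -> U t ->
  lip (vD (central_normal q) t) (central_normal q t) = 0 /\
  lip (vD (central_normal q) t) (q t) = - dsig1 q t /\
  lip (vD (central_normal q) t) (asymptotic_normal q t) = dsig1 q t * conical_curvature q t /\
  vD (asymptotic_normal q) t = vscale (- (dsig1 q t * conical_curvature q t)) (central_normal q t).
Proof.
  intros H Ht. pose proof H as (HU&HQ&Hqq&HF).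
  pose proof (f_pos U q t H Ht) as Hf.
  destruct (alg1 U q t H Ht) as (D0&Eq'&Hhh&Hhq&Eah&Haa&Haq&Hah&Hdet).
  assert (dq : vdiff q t) by (apply (VCC_vdiff U 0); auto).
  assert (dh : vdiff (central_normal q) t) by (apply (VCC_vdiff U 0); auto; apply VCC_h; auto).
  assert (da : vdiff (asymptotic_normal q) t) by (apply (VCC_vdiff U 0); auto; apply VCC_a; auto).
  assert (G1 : lip (vD (central_normal q) t) (central_normal q t) = 0).
  { pose proof (Dconst_lip U _ _ 1 t HU Ht (fun t Ht => proj1 (proj2 (proj2 (alg1 U q t H Ht)))) dh dh).
    rewrite (lip_sym (central_normal q t)) in H0. lra. }
  assert (G2 : lip (vD (central_normal q) t) (q t) = - dsig1 q t).
  { pose proof (Dconst_lip U _ _ 0 t HU Ht (fun t Ht => proj1 (proj2 (proj2 (proj2 (alg1 U q t H Ht))))) dh dq).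
    rewrite Eq', lip_scale_r, Hhh in H0. lra. }
  assert (G3 : lip (vD (central_normal q) t) (asymptotic_normal q t) = dsig1 q t * conical_curvature q t).
  { unfold conical_curvature. rewrite Haa. field. lra. }
  assert (A1 : lip (vD (asymptotic_normal q) t) (asymptotic_normal q t) = 0).
  { pose proof (Dconst_lip U _ _ 1 t HU Ht (fun t Ht => proj1 (proj2 (proj2 (proj2 (proj2 (proj2 (alg1 U q t H Ht)))))))  da da).
    rewrite (lip_sym (asymptotic_normal q t)) in H0. lra. }
  assert (A2 : lip (vD (asymptotic_normal q) t) (q t) = 0).
  { pose proof (Dconst_lip U _ _ 0 t HU Ht (fun t Ht => proj1 (proj2 (proj2 (proj2 (proj2 (proj2 (proj2 (alg1 U q t H Ht)))))))) da dq).
    rewrite Eq', lip_scale_r, Hah in H0. lra. }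
  assert (A3 : lip (vD (asymptotic_normal q) t) (central_normal q t) = - (dsig1 q t * conical_curvature q t)).
  { pose proof (Dconst_lip U _ _ 0 t HU Ht (fun t Ht => proj1 (proj2 (proj2 (proj2 (proj2 (proj2 (proj2 (proj2 (alg1 U q t H Ht))))))))) da dh).
    rewrite (lip_sym (asymptotic_normal q t)), G3 in H0. lra. }
  repeat split; auto.
  set (e := vadd (vD (asymptotic_normal q) t) (vscale (dsig1 q t * conical_curvature q t) (central_normal q t))).
  assert (He : e = mkV3 0 0 0).
  { apply (zero_lemma e (q t) (central_normal q t) (asymptotic_normal q t)).
    - unfold e. rewrite lip_add_l, lip_scale_l, A2, Hhq. ring.
    - unfold e. rewrite lip_add_l, lip_scale_l, A3, Hhh. ring.
    - unfold e. rewrite lip_add_l, lip_scale_l, A1, (lip_sym (central_normal q t)), Hah. ring.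
    - rewrite Hdet. lra. }
  assert (E1 : v1 e = 0) by (rewrite He; auto).
  assert (E2 : v2 e = 0) by (rewrite He; auto).
  assert (E3 : v3 e = 0) by (rewrite He; auto).
  unfold e, vadd, vscale in E1, E2, E3; simpl in E1, E2, E3.
  apply V3_eq; unfold vscale; simpl; lra.
Qed.

Definition gg q Rc t := Rc * (dsig1 q t * conical_curvature q t).

Lemma CC_kappa U q k : frameH U q -> CC U k (conical_curvature q).
Proof.
  intros H. pose proof H as (HU&HQ&_&HF).
  apply (CC_ext U k HU (fun t => lip (vD (central_normal q) t) (asymptotic_normal q t) * / (dsig1 q t * lip (asymptotic_normal q t) (asymptotic_normal q t)))).
  intros; reflexivity.
  apply (CC_mult _ _ HU).
  apply CC_lip; auto. apply VCC_vD, VCC_h; auto. apply VCC_a; auto.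
  apply CC_inv; auto.
  intros t Ht. destruct (alg1 U q t H Ht) as (_&_&_&_&_&Haa&_). rewrite Haa.
  pose proof (f_pos U q t H Ht). lra.
  apply (CC_mult _ _ HU). apply CC_f; auto. apply CC_lip; auto; apply VCC_a; auto.
Qed.

Lemma CC_g U q Rc k : frameH U q -> CC U k (gg q Rc).
Proof.
  intros H. pose proof H as (HU&_).
  unfold gg. apply (CC_mult _ _ HU). apply CC_const; auto.
  apply (CC_mult _ _ HU). apply CC_f; auto. apply CC_kappa; auto.
Qed.

Lemma W_eq U q c Rc t : frameH U q -> (forall k, VCC U k c) -> (forall t, U t -> vD c t = q t) -> U t ->
  vD (fun s => vadd (c s) (vscale Rc (asymptotic_normal q s))) t =
  vadd (q t) (vscale (- gg q Rc t) (central_normal q t)).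
Proof.
  intros H HC Hc Ht. pose proof H as (HU&HQ&_).
  destruct (alg2 U q t H Ht) as (_&_&_&Ea).
  destruct (VCC_vdiff U 0 c t (HC 1%nat) Ht) as (C1&C2&C3).
  destruct (VCC_vdiff U 0 _ t (VCC_a U q 1 H) Ht) as (A1&A2&A3).
  pose proof (Hc t Ht) as Ec.
  assert (E1 : v1 (vD c t) = v1 (q t)) by (rewrite Ec; auto).
  assert (E2 : v2 (vD c t) = v2 (q t)) by (rewrite Ec; auto).
  assert (E3 : v3 (vD c t) = v3 (q t)) by (rewrite Ec; auto).
  assert (F1 : v1 (vD (asymptotic_normal q) t) = - (dsig1 q t * conical_curvature q t) * v1 (central_normal q t)) by (rewrite Ea; auto).
  assert (F2 : v2 (vD (asymptotic_normal q) t) = - (dsig1 q t * conical_curvature q t) * v2 (central_normal q t)) by (rewrite Ea; auto).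
  assert (F3 : v3 (vD (asymptotic_normal q) t) = - (dsig1 q t * conical_curvature q t) * v3 (central_normal q t)) by (rewrite Ea; auto).
  unfold gg. unfold vD in E1, E2, E3, F1, F2, F3; simpl in E1, E2, E3, F1, F2, F3.
  apply V3_eq; unfold vD; simpl.
  - rewrite Derive_plus; auto. rewrite Derive_scal, E1, F1. ring. apply ex_derive_scal; auto.
  - rewrite Derive_plus; auto. rewrite Derive_scal, E2, F2. ring. apply ex_derive_scal; auto.
  - rewrite Derive_plus; auto. rewrite Derive_scal, E3, F3. ring. apply ex_derive_scal; auto.
Qed.

Definition qsH U (cs qs : R -> V3) e := (forall k, VCC U k qs) /\ e <> 0 /\
  (forall t, U t -> lip (qs t) (qs t) = e) /\ (forall t, U t -> lip (vD qs t) (vD qs t) <> 0) /\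
  (forall t, U t -> lip (vD qs t) (vD cs t) = 0) /\
  (forall t, U t -> det3 (vD cs t) (qs t) (vD qs t) = 0).

Lemma par_at U q c Rc qs e t : frameH U q -> (forall k, VCC U k c) -> (forall t, U t -> vD c t = q t) ->
  qsH U (fun s => vadd (c s) (vscale Rc (asymptotic_normal q s))) qs e -> U t ->
  qs t = vscale (- lip (qs t) (q t)) (vadd (q t) (vscale (- gg q Rc t) (central_normal q t))).
Proof.
  intros H HC Hc HS Ht. destruct HS as (HQS&He&Hee&Hdd&Hdw&Hdet).
  pose proof (W_eq U q c Rc t H HC Hc Ht) as EW.
  destruct (alg1 U q t H Ht) as (D0&Eq'&Hhh&Hhq&Eah&Haa&Haq&Hah&Hd).
  pose proof H as (HU&HQ&Hqq&HF).
  assert (Hdp : lip (vD qs t) (qs t) = 0).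
  { pose proof (Dconst_lip U qs qs e t HU Ht Hee (VCC_vdiff U 0 qs t (HQS 1%nat) Ht) (VCC_vdiff U 0 qs t (HQS 1%nat) Ht)).
    rewrite (lip_sym (qs t) (vD qs t)) in H0. lra. }
  pose proof (par_lemma _ _ _ (q t) (Hdw t Ht) Hdp (Hdet t Ht) (Hdd t Ht)) as X.
  rewrite EW in X. rewrite lip_add_l, lip_scale_l, Hqq, Hhq in X; auto.
  replace (-1 + - gg q Rc t * 0) with (-1) in X by ring.
  apply V3_eq.
  - apply (f_equal v1) in X. unfold vscale in X |- *; simpl in X |- *. lra.
  - apply (f_equal v2) in X. unfold vscale in X |- *; simpl in X |- *. lra.
  - apply (f_equal v3) in X. unfold vscale in X |- *; simpl in X |- *. lra.
Qed.

Lemma key U q c Rc qs e s : frameH U q -> (forall k, VCC U k c) -> (forall t, U t -> vD c t = q t) ->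
  qsH U (fun s => vadd (c s) (vscale Rc (asymptotic_normal q s))) qs e -> U s ->
  let lam := - lip (qs s) (q s) in let g := gg q Rc s in let B := lip (vD qs s) (central_normal q s) in
  lam <> 0 /\ g * g - 1 <> 0 /\
  B * (g * g - 1) = lam * (Derive (gg q Rc) s + dsig1 q s * (g * g - 1)) /\
  lip (vD qs s) (q s) = g * B.
Proof.
  intros H HC Hc HS Hs lam g B.
  pose proof HS as (HQS&He&Hee&Hdd&Hdw&Hdet).
  pose proof H as (HU&HQ&Hqq&HF).
  pose proof (par_at U q c Rc qs e s H HC Hc HS Hs) as EP.
  destruct (alg1 U q s H Hs) as (D0&Eq'&Hhh&Hhq&Eah&Haa&Haq&Hah&Hd).
  destruct (alg2 U q s H Hs) as (G1&G2&G3&Ea).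
  pose proof (W_eq U q c Rc s H HC Hc Hs) as EW.
  fold lam g in EP. pose proof (Hqq s Hs) as Hqs.
  assert (Hlam : lam * lam * (g * g - 1) = e).
  { rewrite <- (Hee s Hs), EP, lip_scale_l, lip_scale_r, !lip_add_l, !lip_add_r, !lip_scale_l, !lip_scale_r, Hqs, Hhh.
    rewrite (lip_sym (q s)), Hhq. ring. }
  assert (lam <> 0 /\ g * g - 1 <> 0) as [L1 L2].
  { split; intro Z; apply He; rewrite <- Hlam, Z; ring. }
  assert (Id : forall t, U t -> lip (qs t) (central_normal q t) = lip (qs t) (q t) * gg q Rc t).
  { intros t Ht. pose proof (par_at U q c Rc qs e t H HC Hc HS Ht) as EPt.
    destruct (alg1 U q t H Ht) as (_&_&Hhh'&Hhq'&_).
    rewrite EPt at 1 2. rewrite !lip_scale_l, !lip_add_l, !lip_scale_l, Hhh', Hqq; auto.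
    rewrite (lip_sym (q t) (central_normal q t)), Hhq'. ring. }
  assert (dqs : vdiff qs s) by (apply (VCC_vdiff U 0); auto).
  assert (dq : vdiff q s) by (apply (VCC_vdiff U 0); auto).
  assert (dh : vdiff (central_normal q) s) by (apply (VCC_vdiff U 0); auto; apply VCC_h; auto).
  assert (Dg : ex_derive (gg q Rc) s) by (apply (proj1 (CC_g U q Rc 1 H)); auto).
  assert (Dl : ex_derive (fun t => lip (qs t) (q t)) s).
  { apply (proj1 (CC_lip U 1 qs q HU (HQS 1%nat) (HQ 1%nat))); auto. }
  assert (Der : Derive (fun t => lip (qs t) (central_normal q t)) s = Derive (fun t => lip (qs t) (q t) * gg q Rc t) s).
  { apply Derive_ext_loc. apply (opn_ext U); auto. }
  rewrite Dlip, Derive_mult, Dlip in Der; auto.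
  assert (Hdw' := Hdw s Hs). rewrite EW, lip_add_r, lip_scale_r in Hdw'.
  fold B in Der, Hdw'.
  rewrite Eq' in Der. rewrite lip_scale_r in Der.
  rewrite EP in Der. rewrite !lip_scale_l, !lip_add_l, !lip_scale_l in Der.
  rewrite (lip_sym (q s) (vD (central_normal q) s)), (lip_sym (central_normal q s) (vD (central_normal q) s)), G1, G2 in Der.
  rewrite Hqs, Hhh, (lip_sym (q s) (central_normal q s)), Hhq in Der.
  split; auto. split; auto. split.
  - fold g. set (A := lip (vD qs s) (q s)) in *. set (dg := Derive (gg q Rc) s) in *.
    set (f := dsig1 q s) in *. fold g in Hdw', Der.
    assert (HA : A = g * B) by lra. rewrite HA in Der. nra.
  - fold g in Hdw'. lra.
Qed.

Lemma ode_iff U q Rc s : frameH U q -> U s -> Rc <> 0 ->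
  (Derive (gg q Rc) s + dsig1 q s * (gg q Rc s * gg q Rc s - 1) = 0 <->
   Derive (conical_curvature q) s =
       - / Rc * (Rc ^ 2 * conical_curvature q s ^ 2 * dsig1 q s ^ 2 - 1)
       - / dsig1 q s * Derive (dsig1 q) s * conical_curvature q s).
Proof.
  intros H Hs HR.
  pose proof (f_pos U q s H Hs) as Hf.
  assert (Ef : ex_derive (dsig1 q) s) by (apply (proj1 (CC_f U q 1 H)); auto).
  assert (Ek : ex_derive (conical_curvature q) s) by (apply (proj1 (CC_kappa U q 1 H)); auto).
  assert (Eg : Derive (gg q Rc) s = Rc * (Derive (dsig1 q) s * conical_curvature q s + dsig1 q s * Derive (conical_curvature q) s)).
  { unfold gg. rewrite Derive_scal, Derive_mult; auto. }
  rewrite Eg. unfold gg.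
  set (f := dsig1 q s). set (k := conical_curvature q s). set (df := Derive (dsig1 q) s).
  set (dk := Derive (conical_curvature q) s). fold f in Hf.
  split; intro E.
  - apply (Rmult_eq_reg_l (Rc * f)). rewrite Rmult_minus_distr_l. 
    replace (Rc * f * dk) with (Rc * (df * k + f * dk) - Rc * df * k) by ring.
    replace (Rc * (df * k + f * dk)) with (- (f * (Rc * (f * k) * (Rc * (f * k)) - 1))) by lra.
    field. split; lra.
    apply Rmult_integral_contrapositive; split; lra.
  - rewrite E. field. split; lra.
Qed.

Lemma cn_of x a t m : lip a a = 1 -> 0 < m -> vD x t = vscale m a -> central_normal x t = a.
Proof.
  intros Ha Hm E. unfold central_normal. rewrite E. unfold lnorm. rewrite lip_scale_l, lip_scale_r, Ha.
  rewrite Rmult_1_r, Rabs_pos_eq by nra. rewrite sqrt_square by lra.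
  apply V3_eq; unfold vscale; simpl; field; lra.
Qed.

Lemma vD_opp x t : vD (fun s => vopp (x s)) t = vopp (vD x t).
Proof. apply V3_eq; unfold vD, vopp, vscale; simpl; rewrite Derive_scal; auto. Qed.

From Stdlib Require Import Classical.

Lemma interval_between a b x y z : interval a b x -> interval a b y -> x <= z <= y -> interval a b z.
Proof.
  intros [Ax Bx] [Ay By] [H1 H2]. split.
  - eapply Rbar_lt_le_trans. apply Ax. simpl; auto.
  - eapply Rbar_le_lt_trans. 2: apply By. simpl; auto.
Qed.

Lemma sign_const a b (m : R -> R) : (forall t, interval a b t -> continuous m t) ->
  (forall t, interval a b t -> m t <> 0) ->
  (forall t, interval a b t -> 0 < m t) \/ (forall t, interval a b t -> m t < 0).
Proof.
  intros Hc Hn.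
  destruct (classic (forall t, interval a b t -> 0 < m t)) as [P|P]; [left; auto|right].
  apply not_all_ex_not in P. destruct P as [t1 P].
  assert (I1 : interval a b t1) by (apply NNPP; intro; apply P; intro; contradiction).
  assert (M1 : m t1 < 0).
  { destruct (Rlt_or_le 0 (m t1)); [exfalso; apply P; auto|]. pose proof (Hn t1 I1). lra. }
  intros t2 I2. destruct (Rlt_or_le (m t2) 0) as [|L]; auto. exfalso.
  assert (M2 : 0 < m t2) by (pose proof (Hn t2 I2); lra).
  destruct (Rlt_or_le t1 t2) as [T|T].
  - destruct (Ranalysis5.IVT_interv m t1 t2) as [z [Hz Ez]]; auto.
    intros x Hx. apply continuity_pt_filterlim. apply Hc. apply (interval_between a b t1 t2); auto.
    apply (Hn z); auto. apply (interval_between a b t1 t2); auto.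
  - destruct (Req_dec t1 t2) as [E|E]. subst; lra.
    destruct (Ranalysis5.IVT_interv (fun t => - m t) t2 t1) as [z [Hz Ez]]; auto.
    intros x Hx. apply continuity_pt_opp. apply continuity_pt_filterlim. apply Hc. apply (interval_between a b t2 t1); auto.
    lra. lra. lra.
    apply (Hn z). apply (interval_between a b t2 t1); auto. lra.
Qed.

Theorem theorem5p2 (a b : Rbar) (c q : R -> V3) (Rc : R) :
  Rbar_lt a b ->
  ruled_surface (interval a b) c q ->
  arclength_param (interval a b) c ->
  (forall s, interval a b s -> vD c s = q s) ->
  developable (interval a b) c q ->
  type_Mminus (interval a b) q ->
  Rc <> 0 ->
  forall qs : R -> V3,
  ruled_surface (interval a b)
    (fun s => vadd (c s) (vscale Rc (asymptotic_normal q s))) qs ->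
  developable (interval a b)
    (fun s => vadd (c s) (vscale Rc (asymptotic_normal q s))) qs ->
  (type_Mplus (interval a b) qs \/ type_Mminus (interval a b) qs) ->
  (mannheim_offset_surface (interval a b) c q
     (fun s => vadd (c s) (vscale Rc (asymptotic_normal q s))) qs
   <->
   forall s, interval a b s ->
     Derive (conical_curvature q) s =
       - / Rc * (Rc ^ 2 * conical_curvature q s ^ 2 * dsig1 q s ^ 2 - 1)
       - / dsig1 q s * Derive (dsig1 q) s * conical_curvature q s).
Proof.
  intros Hab Hrs Harc Hcq Hdev Hmm HR qs Hrs2 Hdev2 Htype.
  assert (HU : opn (interval a b)).
  { intros t Ht. apply (open_and _ _ (open_Rbar_gt a) (open_Rbar_lt b)); auto. }
  destruct Hrs as (Sc & Sq & (e2 & He2 & Hqe) & Hdq & Hstr).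
  assert (VC : forall k, VCC (interval a b) k c).
  { destruct Sc as (S1&S2&S3); intros k; repeat split; apply CC_smooth; auto. }
  assert (VQ : forall k, VCC (interval a b) k q).
  { destruct Sq as (S1&S2&S3); intros k; repeat split; apply CC_smooth; auto. }
  assert (Hqq : forall t, interval a b t -> lip (q t) (q t) = -1).
  { intros t Ht. destruct (Hmm t Ht) as [T _]. unfold timelike in T. rewrite Hqe in *; auto. destruct He2; lra. }
  assert (HF : forall t, interval a b t -> 0 < lip (vD q t) (vD q t)).
  { intros t Ht. destruct (Hmm t Ht) as [_ Sp]. unfold spacelike, central_normal in Sp.
    rewrite lip_scale_l, lip_scale_r in Sp.
    destruct (Rlt_or_le 0 (lip (vD q t) (vD q t))); auto.
    set (k := / lnorm (vD q t)) in Sp. set (F := lip (vD q t) (vD q t)) in *. nra. }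
  assert (H : frameH (interval a b) q) by exact (conj HU (conj VQ (conj Hqq HF))).
  destruct Hrs2 as (Scs & Sqs & (e3 & He3 & Hqse) & Hdqs & Hstr2).
  set (cs := fun s => vadd (c s) (vscale Rc (asymptotic_normal q s))) in *.
  assert (HS : qsH (interval a b) cs qs e3).
  { repeat split.
    - destruct Sqs as (S1&S2&S3); apply CC_smooth; auto.
    - destruct Sqs as (S1&S2&S3); apply CC_smooth; auto.
    - destruct Sqs as (S1&S2&S3); apply CC_smooth; auto.
    - destruct He3; lra.
    - auto.
    - auto.
    - auto.
    - intros t Ht. pose proof (Hdev2 t Ht) as D. unfold distribution_parameter in D.
      unfold Rdiv in D. apply Rmult_integral in D. destruct D as [D|D]; auto.
      exfalso. revert D. apply Rinv_neq_0_compat. auto. }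
  split.
  - intros HM s Hs.
    destruct (key _ q c Rc qs e3 s H VC Hcq HS Hs) as (L1&L2&E&_).
    apply (ode_iff _ q Rc s H Hs HR).
    set (B := lip (vD qs s) (central_normal q s)) in *.
    assert (HB : B = 0).
    { destruct (alg1 _ q s H Hs) as (_&_&_&_&_&_&_&Hah&_).
      destruct HM as [HM|HM]; pose proof (HM s Hs) as E1; unfold central_normal in E1.
      - apply (f_equal (fun v => lip v (central_normal q s))) in E1.
        rewrite lip_scale_l, Hah in E1. fold B in E1.
        apply Rmult_integral in E1. destruct E1 as [E1|E1]; auto. exfalso; revert E1.
        apply Rinv_neq_0_compat. unfold lnorm. intro Z. apply sqrt_eq_0 in Z. 2: apply Rabs_pos.
        apply (Hdqs s Hs). apply Rabs_eq_0 in Z; auto.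
      - rewrite vD_opp in E1.
        apply (f_equal (fun v => lip v (central_normal q s))) in E1.
        rewrite lip_scale_l, Hah in E1. unfold vopp in E1. rewrite lip_scale_l in E1. fold B in E1.
        apply Rmult_integral in E1. destruct E1 as [E1|E1]; [|lra]. exfalso; revert E1.
        apply Rinv_neq_0_compat. unfold lnorm. intro Z. apply sqrt_eq_0 in Z. 2: apply Rabs_pos.
        apply (Hdqs s Hs). apply Rabs_eq_0 in Z. unfold vopp in Z. rewrite lip_scale_l, lip_scale_r in Z. lra. }
    rewrite HB in E. 
    assert (Z : Derive (gg q Rc) s + dsig1 q s * (gg q Rc s * gg q Rc s - 1) = 0).
    { apply (Rmult_eq_reg_l (- lip (qs s) (q s))); auto. rewrite <- E. ring. }
    exact Z.
  - intros HO.
    set (mu := fun t => lip (vD qs t) (asymptotic_normal q t)).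
    assert (Dm : forall t, interval a b t -> vD qs t = vscale (mu t) (asymptotic_normal q t)).
    { intros t Ht.
      destruct (key _ q c Rc qs e3 t H VC Hcq HS Ht) as (L1&L2&E&EA).
      pose proof (proj2 (ode_iff _ q Rc t H Ht HR) (HO t Ht)) as Z.
      rewrite Z in E. 
      assert (HB : lip (vD qs t) (central_normal q t) = 0).
      { apply (Rmult_eq_reg_r (gg q Rc t * gg q Rc t - 1)); auto. rewrite E. ring. }
      rewrite HB, Rmult_0_r in EA.
      destruct (alg1 _ q t H Ht) as (_&_&_&Hhq&_&Haa&Haq&Hah&Hd).
      set (e := vadd (vD qs t) (vscale (- mu t) (asymptotic_normal q t))).
      assert (He : e = mkV3 0 0 0).
      { apply (zero_lemma e (q t) (central_normal q t) (asymptotic_normal q t)).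
        - unfold e. rewrite lip_add_l, lip_scale_l, EA, Haq. ring.
        - unfold e. rewrite lip_add_l, lip_scale_l, HB, Hah. ring.
        - unfold e, mu. rewrite lip_add_l, lip_scale_l, Haa. ring.
        - rewrite Hd. lra. }
      assert (E1 : v1 e = 0) by (rewrite He; auto).
      assert (E2 : v2 e = 0) by (rewrite He; auto).
      assert (E3 : v3 e = 0) by (rewrite He; auto).
      unfold e, vadd, vscale in E1, E2, E3; simpl in E1, E2, E3.
      apply V3_eq; unfold vscale; simpl; lra. }
    assert (Mn : forall t, interval a b t -> mu t <> 0).
    { intros t Ht Z. apply (Hdqs t Ht). rewrite (Dm t Ht), Z, lip_scale_l. ring. }
    assert (Mc : forall t, interval a b t -> continuous mu t).
    { intros t Ht. apply (CC_lip (interval a b) 0 (vD qs) (asymptotic_normal q) HU); auto.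
      apply VCC_vD. apply (proj1 HS).
      apply VCC_a; auto. }
    destruct (sign_const a b mu Mc Mn) as [P|P].
    + left. intros t Ht. destruct (alg1 _ q t H Ht) as (_&_&_&_&_&Haa&_).
      apply (cn_of qs _ t (mu t)); auto.
    + right. intros t Ht. destruct (alg1 _ q t H Ht) as (_&_&_&_&_&Haa&_).
      apply (cn_of _ _ t (- mu t)); auto. specialize (P t Ht); lra.
      rewrite vD_opp, (Dm t Ht). apply V3_eq; unfold vopp, vscale; simpl; ring.
Qed.
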